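(* Let $(H,B_1,B_2)$ be a Rota-Baxter system of Hopf algebras with descendent Hopf algebra $H_{B_1,B_2}$. Then $B_1$ and $B_2$ (restricted to $H_1$) are Hopf algebra homomorphisms from $H_{B_1,B_2}$ to $H$. Moreover, $\operatorname{Im}(B_1)$ and $\operatorname{Im}(B_2)$ are Hopf subalgebras of $H$.
   Context: $\mathbb{F}$ is a field of characteristic $0$; Sweedler notation $\Delta(a)=a_1\otimes a_2$. A Rota-Baxter system of Hopf algebras is a triple $(H,B_1,B_2)$ where $(H,\cdot,1,\Delta,\epsilon,S)$ is a cocommutative Hopf algebra and $B_1,B_2:H\to H$ are coalgebra homomorphisms with $B_1(1)=B_2(1)=1$ such that for all $a,b\in H$: $B_1(a)B_1(b)=B_1(B_1(a_1)bS(B_2(a_2)))$ and $B_2(a)B_2(b)=B_2(B_1(a_1)bS(B_2(a_2)))$. Descendent operation $a\circ b=B_1(a_1)bS(B_2(a_2))$, cocycle $\sigma(a)=B_1(a_1)S(B_2(a_2))$, $H_1=\operatorname{Im}(\sigma)$. The descendent Hopf algebra $H_{B_1,B_2}$ is $H_1$ with product $\circ$, unit $1$, coproduct and counit the restrictions of $\Delta,\epsilon$, and antipode $T(a)=S(B_1(a_1))B_2(a_2)$. *)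

(* Defs.v *)
(* An element of H (x) H is represented by a
   finite list of simple tensors [:: (x_i, y_i)] meaning sum_i x_i (x) y_i;
   two such lists denote the same tensor iff they agree on every bilinear map
   into every F-vector space (universal property of the tensor product).
   Same for H (x) H (x) H with trilinear maps. *)
From HB Require Import structures.
From mathcomp Require Import all_boot all_order all_algebra.
Set Implicit Arguments. Unset Strict Implicit. Unset Printing Implicit Defensive.
Import GRing.Theory.
Local Open Scope ring_scope.

Section Hopf.
Variables (F : fieldType) (H : algType F).

Definition bilinear_map (W : lmodType F) (f : H -> H -> W) : Prop :=
  (forall (k : F) x y z, f (k *: x + y) z = k *: f x z + f y z) /\
  (forall (k : F) x y z, f z (k *: x + y) = k *: f z x + f z y).

Definition trilinear_map (W : lmodType F) (f : H -> H -> H -> W) : Prop :=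
  (forall (k : F) x y z u, f (k *: x + y) z u = k *: f x z u + f y z u) /\
  (forall (k : F) x y z u, f z (k *: x + y) u = k *: f z x u + f z y u) /\
  (forall (k : F) x y z u, f z u (k *: x + y) = k *: f z u x + f z u y).

Definition teq2 (s t : seq (H * H)) : Prop :=
  forall (W : lmodType F) (f : H -> H -> W), bilinear_map f ->
    \sum_(p <- s) f p.1 p.2 = \sum_(p <- t) f p.1 p.2.

Definition teq3 (s t : seq (H * H * H)) : Prop :=
  forall (W : lmodType F) (f : H -> H -> H -> W), trilinear_map f ->
    \sum_(p <- s) f p.1.1 p.1.2 p.2 = \sum_(p <- t) f p.1.1 p.1.2 p.2.

Definition linear_fun (W : lmodType F) (f : H -> W) : Prop :=
  forall (k : F) x y, f (k *: x + y) = k *: f x + f y.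

Definition linear_scal (f : H -> F) : Prop :=
  forall (k : F) x y, f (k *: x + y) = k * f x + f y.

Definition is_cocomm_hopf (Delta : H -> seq (H * H)) (eps : H -> F)
  (S : H -> H) : Prop :=
  [/\
      (forall (k : F) a b, teq2 (Delta (k *: a + b))
           ([seq (k *: p.1, p.2) | p <- Delta a] ++ Delta b)),
      (forall a, teq3 [seq (q.1, q.2, p.2) | p <- Delta a, q <- Delta p.1]
                      [seq (p.1, q.1, q.2) | p <- Delta a, q <- Delta p.2]),
      linear_scal eps /\
      (forall a, \sum_(p <- Delta a) eps p.1 *: p.2 = a /\
                 \sum_(p <- Delta a) eps p.2 *: p.1 = a),
      [/\ (forall a b, teq2 (Delta (a * b))
             [seq (p.1 * q.1, p.2 * q.2) | p <- Delta a, q <- Delta b]),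
          teq2 (Delta 1) [:: (1, 1)],
          (forall a b, eps (a * b) = eps a * eps b) & eps 1 = 1] &
      linear_fun S /\
      (forall a, \sum_(p <- Delta a) S p.1 * p.2 = eps a *: 1 /\
                 \sum_(p <- Delta a) p.1 * S p.2 = eps a *: 1)]
  /\
  (forall a, teq2 (Delta a) [seq (p.2, p.1) | p <- Delta a]).

Definition coalg_hom (Delta : H -> seq (H * H)) (eps : H -> F) (B : H -> H) :=
  [/\ linear_fun B,
      forall a, teq2 (Delta (B a)) [seq (B p.1, B p.2) | p <- Delta a] &
      forall a, eps (B a) = eps a].

Variables (Delta : H -> seq (H * H)) (eps : H -> F) (S B1 B2 : H -> H).

Definition circ (a b : H) : H := \sum_(p <- Delta a) B1 p.1 * b * S (B2 p.2).
Definition sigma (a : H) : H := \sum_(p <- Delta a) B1 p.1 * S (B2 p.2).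
Definition inH1 (x : H) : Prop := exists a, x = sigma a.
Definition antipodeT (a : H) : H := \sum_(p <- Delta a) S (B1 p.1) * B2 p.2.

Definition is_RB_system : Prop :=
  [/\ is_cocomm_hopf Delta eps S, coalg_hom Delta eps B1, coalg_hom Delta eps B2,
      B1 1 = 1 /\ B2 1 = 1 &
      (forall a b, B1 a * B1 b = B1 (circ a b)) /\
      (forall a b, B2 a * B2 b = B2 (circ a b))].

Definition desc_hopf_hom (B : H -> H) : Prop :=
  [/\ (forall (k : F) x y, inH1 x -> inH1 y -> B (k *: x + y) = k *: B x + B y) /\
      (forall x y, inH1 x -> inH1 y -> B (circ x y) = B x * B y),
      B 1 = 1,
      forall x, inH1 x -> teq2 (Delta (B x)) [seq (B p.1, B p.2) | p <- Delta x],
      forall x, inH1 x -> eps (B x) = eps x &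
      forall x, inH1 x -> B (antipodeT x) = S (B x)].

End Hopf.

Definition hopf_subalg (F : fieldType) (H : algType F)
  (Delta : H -> seq (H * H)) (S : H -> H) (U : H -> Prop) : Prop :=
  [/\ U 0 /\ (forall (k : F) x y, U x -> U y -> U (k *: x + y)),
      U 1,
      forall x y, U x -> U y -> U (x * y),
      forall x, U x -> exists s : seq (H * H),
          (forall p, p \in s -> U p.1 /\ U p.2) /\ teq2 (Delta x) s &
      forall x, U x -> U (S x)].

Definition image_of (H : Type) (B : H -> H) (y : H) : Prop := exists a, y = B a.

(* Main.v *)
Require Import Defs.
From mathcomp Require Import all_boot all_order all_algebra.
Set Implicit Arguments. Unset Strict Implicit. Unset Printing Implicit Defensive.
Import GRing.Theory.
Local Open Scope ring_scope.

Section Proof.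
Variables (F : fieldType) (H : algType F).
Variables (Delta : H -> seq (H * H)) (eps : H -> F) (S B1 B2 : H -> H).

Lemma lin0 (W : lmodType F) (f : H -> W) : linear_fun f -> f 0 = 0.
Proof.
move=> hf; have h := hf 1 0 0; rewrite !scale1r addr0 in h.
by apply: (addrI (f 0)); rewrite addr0 -h.
Qed.

Lemma linZ (W : lmodType F) (f : H -> W) : linear_fun f -> forall k x, f (k *: x) = k *: f x.
Proof. by move=> hf k x; have := hf k x 0; rewrite addr0 (lin0 hf) addr0. Qed.

Lemma lin_sum (W : lmodType F) (f : H -> W) I (s : seq I) (G : I -> H) :
  linear_fun f -> f (\sum_(i <- s) G i) = \sum_(i <- s) f (G i).
Proof.
move=> hf; elim: s => [|i s IH]; first by rewrite !big_nil lin0.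
by rewrite !big_cons -IH; have := hf 1 (G i) (\sum_(j <- s) G j); rewrite !scale1r.
Qed.

Lemma bil_l (W : lmodType F) (h : H -> H -> W) : bilinear_map h ->
  forall k x z, h (k *: x) z = k *: h x z.
Proof.
case=> h1 _ k x z; have h0 : h 0 z = 0.
  have := h1 1 0 0 z; rewrite !scale1r addr0 => e.
  by apply: (addrI (h 0 z)); rewrite addr0 -e.
by have := h1 k x 0 z; rewrite !addr0 h0 addr0.
Qed.

Hypothesis hDlin : forall (k : F) a b, teq2 (Delta (k *: a + b))
           ([seq (k *: p.1, p.2) | p <- Delta a] ++ Delta b).
Hypothesis hcoass : forall a, teq3 [seq (q.1, q.2, p.2) | p <- Delta a, q <- Delta p.1]
                      [seq (p.1, q.1, q.2) | p <- Delta a, q <- Delta p.2].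
Hypothesis hcounit : forall a, \sum_(p <- Delta a) eps p.1 *: p.2 = a /\
                 \sum_(p <- Delta a) eps p.2 *: p.1 = a.
Hypothesis lS : forall (k : F) x y, S (k *: x + y) = k *: S x + S y.
Hypothesis hanti : forall a, \sum_(p <- Delta a) S p.1 * p.2 = eps a *: 1 /\
                 \sum_(p <- Delta a) p.1 * S p.2 = eps a *: 1.
Hypothesis hcocom : forall a, teq2 (Delta a) [seq (p.2, p.1) | p <- Delta a].
Hypothesis lB1 : forall (k : F) x y, B1 (k *: x + y) = k *: B1 x + B1 y.
Hypothesis lB2 : forall (k : F) x y, B2 (k *: x + y) = k *: B2 x + B2 y.
Hypothesis hB1D : forall a, teq2 (Delta (B1 a)) [seq (B1 p.1, B1 p.2) | p <- Delta a].
Hypothesis hB1e : forall a, eps (B1 a) = eps a.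
Hypothesis hB2D : forall a, teq2 (Delta (B2 a)) [seq (B2 p.1, B2 p.2) | p <- Delta a].
Hypothesis hB2e : forall a, eps (B2 a) = eps a.

Lemma sw_lin (W : lmodType F) (h : H -> H -> W) : bilinear_map h ->
  forall k a b, \sum_(p <- Delta (k *: a + b)) h p.1 p.2 =
    k *: \sum_(p <- Delta a) h p.1 p.2 + \sum_(p <- Delta b) h p.1 p.2.
Proof.
move=> hh k a b; rewrite (hDlin k a b hh) big_cat big_map /= scaler_sumr.
by congr (_ + _); apply: eq_bigr => p _; rewrite bil_l.
Qed.

Lemma coassoc (W : lmodType F) (f : H -> H -> H -> W) : trilinear_map f ->
  forall a, \sum_(p <- Delta a) \sum_(q <- Delta p.1) f q.1 q.2 p.2 =
            \sum_(p <- Delta a) \sum_(q <- Delta p.2) f p.1 q.1 q.2.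
Proof. by move=> hf a; have := hcoass a hf; rewrite !big_allpairs_dep. Qed.

Lemma cocomm (W : lmodType F) (h : H -> H -> W) : bilinear_map h ->
  forall a, \sum_(p <- Delta a) h p.1 p.2 = \sum_(p <- Delta a) h p.2 p.1.
Proof. by move=> hh a; rewrite (hcocom a hh) big_map. Qed.

Definition T := antipodeT Delta S B1 B2.

Ltac lin_tac := rewrite ?(lS, lB1, lB2) ?(mulrDl, mulrDr) -?(scalerAl, scalerAr).

Lemma lT : forall (k : F) x y, T (k *: x + y) = k *: T x + T y.
Proof.
move=> k x y; rewrite /T /antipodeT.
apply: (sw_lin (h := fun u v : H => S (B1 u) * B2 v)).
by split=> k' u v w; lin_tac.
Qed.

Lemma counitS (W : lmodType F) (f : H -> W) : linear_fun f -> forall a,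
  \sum_(p <- Delta a) eps p.2 *: f p.1 = f a.
Proof.
move=> hf a; rewrite -{2}(proj2 (hcounit a)) lin_sum //.
by apply: eq_bigr => p _; rewrite linZ.
Qed.

Lemma counitS1 (W : lmodType F) (f : H -> W) : linear_fun f -> forall a,
  \sum_(p <- Delta a) eps p.1 *: f p.2 = f a.
Proof.
move=> hf a; rewrite -{2}(proj1 (hcounit a)) lin_sum //.
by apply: eq_bigr => p _; rewrite linZ.
Qed.

Section GenB.
Variable B : H -> H.
Hypothesis lB : forall (k : F) x y, B (k *: x + y) = k *: B x + B y.
Hypothesis hBD : forall a, teq2 (Delta (B a)) [seq (B p.1, B p.2) | p <- Delta a].
Hypothesis hBe : forall a, eps (B a) = eps a.

Lemma antiB1 a : \sum_(p <- Delta a) S (B p.1) * B p.2 = eps a *: 1.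
Proof.
have := @hBD a H (fun u v : H => S u * v).
rewrite big_map /= => <-; first by rewrite (proj1 (hanti _)) hBe.
by split=> k x y z; lin_tac.
Qed.

Lemma antiB2 a : \sum_(p <- Delta a) B p.1 * S (B p.2) = eps a *: 1.
Proof.
have := @hBD a H (fun u v : H => u * S v).
rewrite big_map /= => <-; first by rewrite (proj2 (hanti _)) hBe.
by split=> k x y z; lin_tac.
Qed.
End GenB.

Lemma L2 y : \sum_(q <- Delta y) T q.1 * S (B2 q.2) = S (B1 y).
Proof.
transitivity (\sum_(q <- Delta y) \sum_(r <- Delta q.1)
                  (fun u v w => S (B1 u) * B2 v * S (B2 w)) r.1 r.2 q.2).
  by apply: eq_bigr => q _; rewrite /T /antipodeT mulr_suml.
rewrite (coassoc (f := fun u v w : H => S (B1 u) * B2 v * S (B2 w))) /=; last by split; [|split]; move=> k x z u v; lin_tac.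
transitivity (\sum_(q <- Delta y) eps q.2 *: S (B1 q.1)).
  apply: eq_bigr => q _ /=.
  under eq_bigr do rewrite -mulrA.
  by rewrite -mulr_sumr (antiB2 hB2D hB2e) -scalerAr mulr1.
by rewrite (counitS (f := fun x => S (B1 x))) // => k x z; rewrite lB1 lS.
Qed.

Section GenB2.
Variable B : H -> H.
Hypothesis lB : forall (k : F) x y, B (k *: x + y) = k *: B x + B y.
Hypothesis hBD : forall a, teq2 (Delta (B a)) [seq (B p.1, B p.2) | p <- Delta a].
Hypothesis hBe : forall a, eps (B a) = eps a.
Hypothesis hmul : forall a b, B a * B b = B (circ Delta S B1 B2 a b).

Hypothesis hB1 : B 1 = 1.

Ltac lin_tac2 := rewrite ?(lS, lB1, lB2, lT, lB) ?(mulrDl, mulrDr) -?(scalerAl, scalerAr).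

Lemma E a : \sum_(p <- Delta a) circ Delta S B1 B2 p.1 (T p.2) = eps a *: 1.
Proof.
transitivity (\sum_(p <- Delta a) \sum_(q <- Delta p.1)
   (fun u v w : H => B1 u * T w * S (B2 v)) q.1 q.2 p.2) => //.
rewrite (coassoc (f := fun u v w : H => B1 u * T w * S (B2 v))) /=;
  last by split; [|split]; move=> k x z u v; lin_tac2.
transitivity (\sum_(p <- Delta a) \sum_(q <- Delta p.2) B1 p.1 * T q.1 * S (B2 q.2)).
  apply: eq_bigr => p _.
  apply: (cocomm (h := fun v w : H => B1 p.1 * T w * S (B2 v))).
  by split=> k x z u; lin_tac2.
transitivity (\sum_(p <- Delta a) B1 p.1 * S (B1 p.2)).
  apply: eq_bigr => p _; rewrite -L2 mulr_sumr.
  by apply: eq_bigr => q _; rewrite mulrA.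
exact: (antiB2 hB1D hB1e).
Qed.

Lemma L1 a : \sum_(p <- Delta a) B p.1 * B (T p.2) = eps a *: 1.
Proof.
under eq_bigr do rewrite hmul.
rewrite -lin_sum // E linZ // hB1 //.
Qed.

Lemma mainB a : B (T a) = S (B a).
Proof.
have lBT : linear_fun (fun x => B (T x)) by move=> k x y; rewrite /= lT lB.
transitivity (\sum_(p <- Delta a) eps p.1 *: B (T p.2)).
  by symmetry; exact: (counitS1 lBT a).
transitivity (\sum_(p <- Delta a) \sum_(q <- Delta p.1)
   (fun u v w : H => S (B u) * B v * B (T w)) q.1 q.2 p.2).
  apply: eq_bigr => p _ /=.
  by rewrite -mulr_suml (antiB1 hBD hBe) -scalerAl mul1r.
rewrite (coassoc (f := fun u v w : H => S (B u) * B v * B (T w))) /=;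
  last by split; [|split]; move=> k x z u v; lin_tac2.
transitivity (\sum_(p <- Delta a) eps p.2 *: S (B p.1)).
  apply: eq_bigr => p _.
  under eq_bigr do rewrite -mulrA.
  by rewrite -mulr_sumr L1 -scalerAr mulr1.
apply: (counitS (f := fun x => S (B x))).
by move=> k x y; rewrite /= lB lS.
Qed.

Lemma descB : desc_hopf_hom Delta eps S B1 B2 B.
Proof.
split.
- by split => [k x y _ _|x y _ _]; [exact: lB | rewrite hmul].
- exact: hB1.
- by move=> x _; exact: hBD.
- by move=> x _; exact: hBe.
- by move=> x _; exact: mainB.
Qed.

Lemma subB : hopf_subalg Delta S (image_of B).
Proof.
split.
- split; first by exists 0; rewrite (lin0 lB).
  by move=> k x y [a ->] [b ->]; exists (k *: a + b); rewrite lB.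
- by exists 1.
- by move=> x y [a ->] [b ->]; exists (circ Delta S B1 B2 a b); exact: hmul.
- move=> x [a ->]; exists [seq (B p.1, B p.2) | p <- Delta a]; split; last exact: hBD.
  by move=> p /mapP [q _ ->]; split; [exists q.1 | exists q.2].
- by move=> x [a ->]; exists (T a); rewrite mainB.
Qed.
End GenB2.

End Proof.



Theorem mainTheorem10 (F : fieldType) (H : algType F)
  (Delta : H -> seq (H * H)) (eps : H -> F) (S B1 B2 : H -> H) :
  [pchar F] =i pred0 ->
  is_RB_system Delta eps S B1 B2 ->
  [/\ desc_hopf_hom Delta eps S B1 B2 B1,
      desc_hopf_hom Delta eps S B1 B2 B2,
      hopf_subalg Delta S (image_of B1) &
      hopf_subalg Delta S (image_of B2)].
Proof.
move=> _ [[[hDlin hcoass [heps hcounit] _ [lS hanti]] hcocom]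
          [lB1 hB1D hB1e] [lB2 hB2D hB2e] [h11 h21] [m1 m2]].
split; [apply: (@descB F H Delta eps S B1 B2) | apply: (@descB F H Delta eps S B1 B2) | apply: (@subB F H Delta eps S B1 B2) | apply: (@subB F H Delta eps S B1 B2)]; eassumption.
Qed.
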